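(* Let $J-CI=L^{(1)}\cdots L^{(p)}U$ be a Darboux factorization and, for each $j=0,1,\ldots,p$, let $\nu^{(j)}=(\nu^{(j)}_1,\ldots,\nu^{(j)}_p)$ be a vector of $p$-orthogonality for $\{P^{(j)}_n\}$. Then for each $j=0,1,\ldots,p-1$: (a) $\big(\nu^{(j+1)}_1,\ldots,\nu^{(j+1)}_{p-1},\,(z-C)\nu^{(j)}_1\big)$ is a vector of $p$-orthogonality for $\{P^{(j+1)}_n\}$; (b) $\big(\nu^{(j)}_1,\,\nu^{(j+1)}_1,\ldots,\nu^{(j+1)}_{p-1}\big)$ is a vector of $p$-orthogonality for $\{P^{(j)}_n\}$.
   Context: Fix $p\in\mathbb{N}$. Let $J=(a_{n,m})_{n,m\ge0}$ be an infinite matrix with $a_{n,n+1}=1$, $a_{n,m}=0$ for $m>n+1$ or $m<n-p$, and $a_{n+p,n}\neq0$ for all $n\ge0$. Define polynomials by $P_{-p}=\cdots=P_{-1}=0$, $P_0\equiv1$, $P_{n+1}(z)=(z-a_{n,n})P_n(z)-\sum_{i=1}^p a_{n,n-i}P_{n-i}(z)$ for $n\ge0$. Fix $C\in\mathbb{C}$ with $P_n(C)\neq0$ for all $n\ge1$. A Darboux factorization of $J-CI$ is a factorization $J-CI=L^{(1)}L^{(2)}\cdots L^{(p)}U$ where, indexing rows and columns by $1,2,\ldots$, $U$ is upper bidiagonal with $U_{k,k}=\gamma_{(k-1)(p+1)+1}$, $U_{k,k+1}=1$, and for $j=1,\ldots,p$, $L^{(j)}$ is lower bidiagonal with ones on the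 diagonal and $L^{(j)}_{k+1,k}=\gamma_{(k-1)(p+1)+j+1}\neq0$ for all $k\ge1$ (the $\gamma_i$ being complex numbers). Its Darboux transformations are $J^{(j)}=CI+L^{(j+1)}\cdots L^{(p)}UL^{(1)}\cdots L^{(j)}$, $j=1,\ldots,p$; also $J^{(0)}:=J$. Each $J^{(j)}$ is lower Hessenberg with ones on the superdiagonal, and $\{P^{(j)}_n\}_{n\ge0}$ denotes the unique sequence of polynomials with $P^{(j)}_0\equiv1$ such that $v^{(j)}(z)=(P^{(j)}_0(z),P^{(j)}_1(z),\ldots)^T$ satisfies $J^{(j)}v^{(j)}(z)=zv^{(j)}(z)$; $P^{(0)}_n=P_n$. A vector of $p$-orthogonality for a sequence of polynomials $\{Q_n\}$ is a vector $(\nu_1,\ldots,\nu_p)$ of linear functionals on polynomials with, for each $r=1,\ldots,p$ and $k=0,1,\ldots$: $\nu_r[z^kQ_n]=0$ for all $n\ge kp+r$, and $\nu_r[z^kQ_{kp+r-1}]\neq0$. For a functional $\mu$, $(z-C)\mu$ is the functional $q\mapsto\mu[(z-C)q]$. *)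

(* Defs.v *)
From HB Require Import structures.
From mathcomp Require Import all_boot all_order all_algebra.
Set Implicit Arguments. Unset Strict Implicit. Unset Printing Implicit Defensive.
Import Order.TTheory GRing.Theory Num.Theory.
Local Open Scope ring_scope.

Section Defs.
Variable R : fieldType.

(* Infinite matrices are functions nat -> nat -> R, indexed from 0
   (paper's row/column k is our k-1). *)
Definition infmx := nat -> nat -> R.

(* Product of infinite matrices A*B, valid (equal to the true, finite-sum
   product) whenever row i of A vanishes beyond column i+1, which holds for
   every left factor used below (lower bidiagonal L's, L..LU, L..LUL..L). *)
Definition mulinf (A B : infmx) : infmx :=
  fun i k => \sum_(m < i.+2) A i m * B m k.

Definition Umat (gamma : nat -> R) (p : nat) : infmx :=
  fun i k => if k == i then gamma (i * p.+1 + 1)%N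
             else if k == i.+1 then 1 else 0.

Definition Lmat (gamma : nat -> R) (p j : nat) : infmx :=
  fun i k => if i == k then 1
             else if i == k.+1 then gamma (k * p.+1 + j + 1)%N else 0.

Definition LU (gamma : nat -> R) (p j : nat) : infmx :=
  foldr (fun l M => mulinf (Lmat gamma p l) M) (Umat gamma p) (iota j (p.+1 - j)).

(* J^{(j)} = C I + L^{(j+1)} ... L^{(p)} U L^{(1)} ... L^{(j)} for 1 <= j,
   and J^{(0)} = J. *)
Definition Jdarb (J : infmx) (gamma : nat -> R) (p : nat) (C : R) (j : nat)
  : infmx :=
  if j == 0%N then J else
  fun i k => (i == k)%:R * C
    + foldl (fun M l => mulinf M (Lmat gamma p l)) (LU gamma p j.+1) (iota 1 j) i k.

Definition lfun (mu : {poly R} -> R) : Prop :=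
  forall (a : R) (x y : {poly R}), mu (a *: x + y) = a * mu x + mu y.

Definition shiftf (C : R) (mu : {poly R} -> R) : {poly R} -> R :=
  fun q => mu (('X - C%:P) * q).

Definition p_orth (p : nat) (nu : nat -> {poly R} -> R) (Q : nat -> {poly R})
  : Prop :=
  forall r, (1 <= r <= p)%N ->
    [/\ lfun (nu r),
        (forall k n, (k * p + r <= n)%N -> nu r ('X^k * Q n) = 0) &
        (forall k, nu r ('X^k * Q (k * p + r - 1)%N) != 0)].

Definition vec_a (p : nat) (C : R) (nuj nuj1 : nat -> {poly R} -> R)
  : nat -> {poly R} -> R :=
  fun r => if (r < p)%N then nuj1 r else shiftf C (nuj 1%N).

Definition vec_b (nuj nuj1 : nat -> {poly R} -> R) : nat -> {poly R} -> R :=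
  fun r => if r == 1%N then nuj 1%N else nuj1 r.-1.

End Defs.

(* Main.v *)
Require Import Defs.
From HB Require Import structures.
From mathcomp Require Import all_boot all_order all_algebra.
From Stdlib Require Import FunctionalExtensionality.
From mathcomp Require Import zify.
Set Implicit Arguments. Unset Strict Implicit. Unset Printing Implicit Defensive.
Import Order.TTheory GRing.Theory Num.Theory.
Local Open Scope ring_scope.

Definition act (R : fieldType) (A : nat -> nat -> R) (v : nat -> {poly R}) : nat -> {poly R} :=
  fun i => \sum_(m < i.+2) A i m *: v m.

Definition LS (R : fieldType) (gamma : nat -> R) (p : nat) (s : seq nat) (v : nat -> {poly R}) :=
  foldr (fun l w => act (Lmat gamma p l) w) v s.

Lemma sum_widen (R : fieldType) (n N : nat) (f : nat -> {poly R}) :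
  (n <= N)%N -> (forall l, (n <= l)%N -> (l < N)%N -> f l = 0) ->
  \sum_(l < n) f l = \sum_(l < N) f l.
Proof.
move=> hnN hf; rewrite (big_ord_widen N f hnN) big_mkcond /=.
apply: eq_bigr => i _; case: ifP => // /negbT; rewrite -leqNgt => h.
by rewrite hf.
Qed.

Lemma act_mul (R : fieldType) (A B : nat -> nat -> R) v i :
  (forall m k, (m.+1 < k)%N -> B m k = 0) ->
  (forall i, A i i.+1 * B i.+1 i.+2 = 0) ->
  act (mulinf A B) v i = act A (act B v) i.
Proof.
move=> hB hAB; rewrite /act /mulinf.
have -> : \sum_(m < i.+2) A i m *: (\sum_(l < m.+2) B m l *: v l)
   = \sum_(m < i.+2) \sum_(l < i.+3) (A i m * B m l) *: v l.
  apply: eq_bigr => m _; rewrite scaler_sumr.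
  have h1 : (m.+2 <= i.+3)%N by have := ltn_ord m.
  rewrite (@sum_widen _ m.+2 i.+3 (fun l => A i m *: (B m l *: v l)) h1); last first.
    by move=> l hl _; rewrite hB ?scale0r ?scaler0.
  by apply: eq_bigr => l _; rewrite scalerA.
rewrite [RHS]exchange_big /= [RHS]big_ord_recr /=.
rewrite [X in _ = _ + X](_ : _ = 0) ?addr0; last first.
    rewrite -scaler_suml big_ord_recr /= hAB addr0.
  rewrite big1 ?scale0r // => m _; rewrite hB ?mulr0 //.
  by have := ltn_ord m.
by apply: eq_bigr => l _; rewrite scaler_suml.
Qed.

Lemma act_U (R : fieldType) (gamma : nat -> R) p e m :
  act (Umat gamma p) e m = gamma (m * p.+1 + 1)%N *: e m + e m.+1.
Proof.
rewrite /act big_ord_recr big_ord_recr /= /Umat.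
rewrite big1 ?add0r; last first.
  move=> k _; have hk := ltn_ord k.
  rewrite (ltn_eqF hk) ifF ?scale0r //; apply/negbTE; rewrite neq_ltn.
  by rewrite (ltn_trans hk).
by rewrite eqxx (gtn_eqF (ltnSn m)) eqxx scale1r.
Qed.

Lemma neqF (a b : nat) : a <> b -> (a == b) = false.
Proof. by move/eqP/negbTE. Qed.

Lemma act_L (R : fieldType) (gamma : nat -> R) p l e m :
  act (Lmat gamma p l) e m =
  e m + (if m is m'.+1 then gamma (m' * p.+1 + l + 1)%N *: e m' else 0).
Proof.
rewrite /act big_ord_recr big_ord_recr /= /Lmat.
have h1 : m <> m.+1 by lia.
have h2 : m <> m.+2 by lia.
rewrite (neqF h1) (neqF h2).
rewrite eqxx scale1r scale0r addr0.
clear h1 h2; case: m => [|m]; first by rewrite big_ord0 add0r addr0.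
rewrite big_ord_recr /= big1 ?add0r; last first.
  move=> k _; have hk := ltn_ord k.
  have h1 : m.+1 <> k by lia.
  have h2 : m.+1 <> k.+1 by lia.
  by rewrite (neqF h1) (neqF h2) scale0r.
have h1 : m.+1 <> m by lia.
by rewrite (neqF h1) eqxx addrC.
Qed.

Lemma act_diag (R : fieldType) (C : R) (e : nat -> {poly R}) n :
  \sum_(m < n.+2) ((n == m)%:R * C) *: e m = C *: e n.
Proof.
rewrite big_ord_recr big_ord_recr /= big1 ?add0r; last first.
  by move=> k _; rewrite (gtn_eqF (ltn_ord k)) mul0r scale0r.
by rewrite eqxx (ltn_eqF (ltnSn n)) mul0r scale0r addr0 mul1r.
Qed.

Lemma act_scal (R : fieldType) (A : nat -> nat -> R) (q : {poly R}) e i :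
  act A (fun m => q * e m) i = q * act A e i.
Proof. by rewrite /act mulr_sumr; apply: eq_bigr => m _; rewrite scalerAr. Qed.

Lemma act_sub (R : fieldType) (A : nat -> nat -> R) x y i :
  act A (fun m => x m - y m) i = act A x i - act A y i.
Proof. by rewrite /act -sumrB; apply: eq_bigr => m _; rewrite scalerBr. Qed.

Lemma LS_sub (R : fieldType) gamma p s (x y : nat -> {poly R}) :
  LS gamma p s (fun m => x m - y m) = (fun m => LS gamma p s x m - LS gamma p s y m).
Proof.
elim: s => [//|l s IH] /=; apply: functional_extensionality => i.
by rewrite IH act_sub.
Qed.

Lemma act_sub' (R : fieldType) (A : nat -> nat -> R) x y :
  act A (fun m => x m - y m) = (fun i => act A x i - act A y i).
Proof. by apply: functional_extensionality => i; rewrite act_sub. Qed.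

Definition UB1 (R : fieldType) (B : nat -> nat -> R) := forall m k, (m.+1 < k)%N -> B m k = 0.

Lemma UB1_U (R : fieldType) (gamma : nat -> R) p : UB1 (Umat gamma p).
Proof.
move=> m k hk; rewrite /Umat.
have h1 : k <> m by lia.
have h2 : k <> m.+1 by lia.
by rewrite (neqF h1) (neqF h2).
Qed.

Lemma UB1_LM (R : fieldType) (gamma : nat -> R) p l M :
  UB1 M -> UB1 (mulinf (Lmat gamma p l) M).
Proof.
move=> hM m k hk; rewrite /mulinf big1 // => i _.
have hi := ltn_ord i.
case: (ltnP (nat_of_ord i) m.+1) => h.
  by rewrite hM ?mulr0 //; lia.
rewrite /Lmat.
have h1 : m <> i by lia.
have h2 : m <> i.+1 by lia.
by rewrite (neqF h1) (neqF h2) mul0r.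
Qed.

Lemma Lsup0 (R : fieldType) (gamma : nat -> R) p l i : Lmat gamma p l i i.+1 = 0.
Proof.
rewrite /Lmat.
have h1 : i <> i.+1 by lia.
have h2 : i <> i.+2 by lia.
by rewrite (neqF h1) (neqF h2).
Qed.

Lemma act_foldr (R : fieldType) (gamma : nat -> R) p s v :
  act (foldr (fun l M => mulinf (Lmat gamma p l) M) (Umat gamma p) s) v
  = LS gamma p s (act (Umat gamma p) v).
Proof.
have hUB : forall s, UB1 (foldr (fun l M => mulinf (Lmat gamma p l) M) (Umat gamma p) s).
  by elim=> [|l s' IH] /=; [apply: UB1_U | apply: UB1_LM].
elim: s => [//|l s IH] /=; apply: functional_extensionality => i.
rewrite act_mul; first by rewrite IH.
  exact: hUB.
by move=> k; rewrite Lsup0 mul0r.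
Qed.

Lemma act_foldl (R : fieldType) (gamma : nat -> R) p s A v :
  act (foldl (fun M l => mulinf M (Lmat gamma p l)) A s) v = act A (LS gamma p s v).
Proof.
elim: s A v => [//|l s IH] A v /=.
rewrite IH; apply: functional_extensionality => i.
rewrite act_mul //; last by move=> k; rewrite Lsup0 mulr0.
move=> m k hk; rewrite /Lmat.
have h1 : m <> k by lia.
have h2 : m <> k.+1 by lia.
by rewrite (neqF h1) (neqF h2).
Qed.

Definition F (R : fieldType) (gamma : nat -> R) p j (v : nat -> {poly R}) :=
  LS gamma p (iota j.+1 (p - j)) (act (Umat gamma p) (LS gamma p (iota 1 j) v)).

Lemma eig_conv (R : fieldType) (J : nat -> nat -> R) gamma p C
  (hfact : forall i k, J i k - (i == k)%:R * C = LU gamma p 1 i k) j v n :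
  act (Jdarb J gamma p C j) v n = C *: v n + F gamma p j v n.
Proof.
rewrite /Jdarb; case: j => [|j] /=.
  have -> : act J v n = act (fun i k => (i == k)%:R * C + LU gamma p 1 i k) v n.
    by rewrite /act; apply: eq_bigr => m _; rewrite -hfact addrC subrK.
  rewrite /act; under eq_bigr do rewrite scalerDl.
  rewrite big_split /= act_diag; congr (_ + _).
  have := act_foldr gamma p (iota 1 p) v => /(congr1 (fun f => f n)).
  by rewrite /F /LU subn0 /= subSS subn0 /act.
rewrite /act; under eq_bigr do rewrite scalerDl.
rewrite big_split /= act_diag; congr (_ + _).
have := act_foldl gamma p (iota 1 j.+1) (LU gamma p j.+2) v => /(congr1 (fun f => f n)).
rewrite /act => ->.
have := act_foldr gamma p (iota j.+2 (p.+1 - j.+2)) (LS gamma p (iota 1 j.+1) v).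
by move=> /(congr1 (fun f => f n)); rewrite /act.
Qed.

Lemma lfun0 (R : fieldType) (phi : {poly R} -> R) : lfun phi -> phi 0 = 0.
Proof.
move=> h; have := h 1 0 0; rewrite scale1r addr0 mul1r -{1}[phi 0]addr0.
by move=> /addrI <-.
Qed.

Lemma lfunD (R : fieldType) (phi : {poly R} -> R) x y : lfun phi -> phi (x + y) = phi x + phi y.
Proof. by move=> h; have := h 1 x y; rewrite scale1r mul1r. Qed.

Lemma lfunZ (R : fieldType) (phi : {poly R} -> R) a x : lfun phi -> phi (a *: x) = a * phi x.
Proof. by move=> h; have := h a x 0; rewrite addr0 (lfun0 h) addr0. Qed.

Definition Van (R : fieldType) (phi : {poly R} -> R) (e : nat -> {poly R}) t :=
  forall m, (t <= m)%N -> phi (e m) = 0.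

Definition Band (R : fieldType) (phi : {poly R} -> R) (e : nat -> {poly R}) t :=
  Van phi e t /\ phi (e t.-1) != 0.

Lemma Van_L (R : fieldType) (gamma : nat -> R) p l phi e t :
  lfun phi -> Van phi e t -> Van phi (act (Lmat gamma p l) e) t.+1.
Proof.
move=> hl hv [//|m] hm; rewrite act_L (lfunD _ _ hl) (lfunZ _ _ hl).
by rewrite !hv ?mulr0 ?addr0 //; lia.
Qed.

Lemma Van_U (R : fieldType) (gamma : nat -> R) p phi e t :
  lfun phi -> Van phi e t -> Van phi (act (Umat gamma p) e) t.
Proof.
move=> hl hv m hm; rewrite act_U (lfunD _ _ hl) (lfunZ _ _ hl).
by rewrite !hv ?mulr0 ?addr0 //; lia.
Qed.

Lemma Van_LS (R : fieldType) (gamma : nat -> R) p s phi e t :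
  lfun phi -> Van phi e t -> Van phi (LS gamma p s e) (t + size s).
Proof.
move=> hl hv; elim: s => [|l s IH] /=; first by rewrite addn0.
by rewrite addnS; apply: Van_L.
Qed.

Lemma Band_L (R : fieldType) (gamma : nat -> R) p l phi e t
  (hgam : forall j k, (1 <= j <= p)%N -> gamma (k * p.+1 + j + 1)%N != 0) :
  (1 <= l <= p)%N -> (0 < t)%N ->
  lfun phi -> Band phi e t -> Band phi (act (Lmat gamma p l) e) t.+1.
Proof.
move=> hlp ht hl [hv hn]; split; first exact: Van_L.
rewrite /= act_L (lfunD _ _ hl); case: t ht hv hn => [//|t] _ hv hn.
rewrite (lfunZ _ _ hl) hv // add0r mulf_neq0 //; exact: hgam.
Qed.

Lemma Band_U (R : fieldType) (gamma : nat -> R) p phi e t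
  (hU : forall i, gamma (i * p.+1 + 1)%N != 0) :
  (0 < t)%N -> lfun phi -> Band phi e t -> Band phi (act (Umat gamma p) e) t.
Proof.
move=> ht hl [hv hn]; split; first exact: Van_U.
rewrite act_U (lfunD _ _ hl) (lfunZ _ _ hl) prednK // (hv t) // addr0 mulf_neq0 //.
Qed.

Lemma Band_LS (R : fieldType) (gamma : nat -> R) p s phi e t
  (hgam : forall j k, (1 <= j <= p)%N -> gamma (k * p.+1 + j + 1)%N != 0) :
  all (fun l => (1 <= l <= p)%N) s -> (0 < t)%N ->
  lfun phi -> Band phi e t -> Band phi (LS gamma p s e) (t + size s).
Proof.
move=> hs ht hl hb; elim: s hs => [|l s IH] /=; first by rewrite addn0.
move=> /andP[hl1 hs]; rewrite addnS; apply: Band_L => //.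
  by rewrite addn_gt0 ht.
exact: IH.
Qed.

Definition Zb (R : fieldType) (e : nat -> {poly R}) n := forall m, (m < n)%N -> e m = 0.

Lemma Zb_L (R : fieldType) (gamma : nat -> R) p l e n :
  Zb e n -> Zb (act (Lmat gamma p l) e) n /\ act (Lmat gamma p l) e n = e n.
Proof.
move=> hz; split.
  move=> m hm; rewrite act_L (hz m hm); case: m hm => [|m] hm; first by rewrite addr0.
  by rewrite (hz m) ?scaler0 ?addr0 //; lia.
rewrite act_L; case: n hz => [|n] hz; first by rewrite addr0.
by rewrite (hz n) // scaler0 addr0.
Qed.

Lemma Zb_LS (R : fieldType) (gamma : nat -> R) p s e n :
  Zb e n -> Zb (LS gamma p s e) n /\ LS gamma p s e n = e n.
Proof.
move=> hz; elim: s => [//|l s [IH1 IH2]] /=.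
by have [h1 h2] := Zb_L gamma p l IH1; split => //; rewrite h2.
Qed.

Lemma Zb_U (R : fieldType) (gamma : nat -> R) p e n :
  Zb e n.+1 -> Zb (act (Umat gamma p) e) n /\ act (Umat gamma p) e n = e n.+1.
Proof.
move=> hz; split.
  by move=> m hm; rewrite act_U (hz m) ?(hz m.+1) ?scaler0 ?addr0 //; lia.
by rewrite act_U hz ?scaler0 ?add0r.
Qed.

Lemma Zb_F (R : fieldType) (gamma : nat -> R) p j e n :
  Zb e n.+1 -> F gamma p j e n = e n.+1.
Proof.
move=> hz; rewrite /F.
have [h1 h2] := Zb_LS gamma p (iota 1 j) hz.
have [h3 h4] := Zb_U gamma p h1.
have [h5 h6] := Zb_LS gamma p (iota j.+1 (p - j)) h3.
by rewrite h6 h4 h2.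
Qed.

Lemma uniq_eig (R : fieldType) (gamma : nat -> R) p j (C : R) x y :
  x 0%N = y 0%N ->
  (forall n, F gamma p j x n = ('X - C%:P) * x n) ->
  (forall n, F gamma p j y n = ('X - C%:P) * y n) ->
  forall n, x n = y n.
Proof.
move=> h0 hx hy.
pose d := fun m => x m - y m.
have hd : forall n, F gamma p j d n = ('X - C%:P) * d n.
  move=> n; rewrite /F /d LS_sub act_sub' LS_sub /=.
  have := hx n; have := hy n; rewrite /F => -> ->.
  by rewrite mulrBr.
suff : forall n, Zb d n.+1.
  by move=> h n; apply/eqP; rewrite -subr_eq0; apply/eqP; apply: (h n).
elim=> [|n IH].
  by move=> m; rewrite ltnS leqn0 => /eqP ->; rewrite /d h0 subrr.
move=> m; rewrite ltnS leq_eqVlt => /orP[/eqP ->|]; last exact: IH.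
by rewrite -(Zb_F gamma p j IH) hd IH // mulr0.
Qed.

Lemma lfun_Xk (R : fieldType) (nu : {poly R} -> R) k :
  lfun nu -> lfun (fun q => nu ('X^k * q)).
Proof. by move=> h a x y /=; rewrite mulrDr -scalerAr h. Qed.

Lemma lfun_shift (R : fieldType) (nu : {poly R} -> R) C :
  lfun nu -> lfun (shiftf C nu).
Proof. by move=> h a x y; rewrite /shiftf mulrDr -scalerAr h. Qed.

Lemma band_of (R : fieldType) (nu : {poly R} -> R) (Q : nat -> {poly R}) k t :
  (0 < t)%N -> (forall n, (t <= n)%N -> nu ('X^k * Q n) = 0) ->
  nu ('X^k * Q (t - 1)%N) != 0 -> Band (fun q => nu ('X^k * q)) Q t.
Proof. by move=> ht hv hn; split => //; rewrite -subn1. Qed.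

Lemma all_iota (a b p : nat) : (1 <= a)%N -> (a + b <= p.+1)%N ->
  all (fun l => (1 <= l <= p)%N) (iota a b).
Proof. move=> h1 h2; apply/allP => l; rewrite mem_iota => /andP[h3 h4]; apply/andP; lia. Qed.

Lemma coef0_lfun (R : fieldType) : lfun (fun q : {poly R} => q`_0).
Proof. by move=> a x y; rewrite coefD coefZ. Qed.

Theorem lemma5 (R : numClosedFieldType) (p : nat) (hp : (0 < p)%N)
  (J : nat -> nat -> R)
  (hJsup : forall n, J n n.+1 = 1)
  (hJup : forall n m, (n.+1 < m)%N -> J n m = 0)
  (hJlow : forall n m, (m + p < n)%N -> J n m = 0)
  (hJdiag : forall n, J (n + p)%N n != 0)
  (P : nat -> {poly R})
  (hP0 : P 0%N = 1)
  (hPrec : forall n, P n.+1 = ('X - (J n n)%:P) * P n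
             - \sum_(1 <= i < p.+1 | (i <= n)%N) J n (n - i)%N *: P (n - i)%N)
  (C : R) (hC : forall n, (0 < n)%N -> (P n).[C] != 0)
  (gamma : nat -> R)
  (hgam : forall j k, (1 <= j <= p)%N -> gamma (k * p.+1 + j + 1)%N != 0)
  (hfact : forall i k, J i k - (i == k)%:R * C = LU gamma p 1 i k)
  (Pj : nat -> nat -> {poly R})
  (hPj0 : forall j, (j <= p)%N -> Pj j 0%N = 1)
  (hPjeig : forall j n, (j <= p)%N ->
     \sum_(m < n.+2) Jdarb J gamma p C j n m *: Pj j m = 'X * Pj j n)
  (nu : nat -> nat -> {poly R} -> R)
  (hnu : forall j, (j <= p)%N -> p_orth p (nu j) (Pj j)) :
  forall j, (j < p)%N ->
    p_orth p (vec_a p C (nu j) (nu j.+1)) (Pj j.+1)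
    /\ p_orth p (vec_b (nu j) (nu j.+1)) (Pj j).
Proof.
have hF : forall j n, (j <= p)%N -> F gamma p j (Pj j) n = ('X - C%:P) * Pj j n.
  move=> j n hj; have := hPjeig j n hj; rewrite -/(act _ _ _) eig_conv // => h.
  by rewrite mulrBl -h mul_polyC [C *: _ + _]addrC addrK.
have hU : forall i, gamma (i * p.+1 + 1)%N != 0.
  move=> i; apply/eqP => g0.
  pose d := fun m : nat => if m == i then (1 : {poly R}) else 0.
  have h0 : forall m, m <> i -> d m = 0 by move=> m /neqF; rewrite /d => ->.
  have hv : Van (fun q : {poly R} => q`_0) (act (Umat gamma p) d) i.
    move=> m hm; rewrite act_U (h0 m.+1) ?addr0; last by lia.
    case: (eqVneq m i) => [->|hmi]; first by rewrite g0 scale0r coef0.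
    by rewrite h0 ?scaler0 ?coef0 //; apply/eqP.
  have := eig_conv hfact 0 d (i + p).
  rewrite /F subn0 /= => /(congr1 (fun q : {poly R} => q`_0)).
  rewrite (h0 (i + p)%N) ?scaler0; last by lia.
  rewrite add0r (@Van_LS _ gamma p (iota 1 p) _ _ _ (@coef0_lfun R) hv); last by rewrite size_iota.
  rewrite /act coef_sum.
  under eq_bigr => m _ do rewrite coefZ.
  have -> : \sum_(m < (i + p).+2) J (i + p)%N m * (d m)`_0
      = \sum_(m < (i + p).+2 | nat_of_ord m == i) J (i + p)%N m.
    rewrite [RHS]big_mkcond; apply: eq_bigr => m _; rewrite /d.
    by case: eqP => _; rewrite ?coef1 ?coef0 ?mulr1 ?mulr0.
  rewrite (big_ord1_eq _ (fun m => J (i + p)%N m)) ifT; last by lia.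
  by move/eqP; rewrite (negbTE (hJdiag i)).
have hA : forall j, (j < p)%N -> forall n,
    Pj j n = act (Lmat gamma p j.+1) (Pj j.+1) n.
  move=> j hj; apply: (uniq_eig (j:=j) (C:=C)).
  - by rewrite act_L hPj0 ?hPj0 ?addr0 //; lia.
  - by move=> n; apply: hF; lia.
  move=> n.
  have hFj1 : F gamma p j.+1 (Pj j.+1) = fun m => ('X - C%:P) * Pj j.+1 m.
    by apply: functional_extensionality => m; apply: hF.
  have e1 : (p - j = (p - j.+1).+1)%N by lia.
  have e2 : iota 1 j.+1 = iota 1 j ++ [:: j.+1] by have := iotaD 1 j 1; rewrite addn1 add1n.
  have : F gamma p j (act (Lmat gamma p j.+1) (Pj j.+1)) =
         act (Lmat gamma p j.+1) (F gamma p j.+1 (Pj j.+1)).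
    by rewrite /F e1 e2 /LS foldr_cat.
  by move=> ->; rewrite hFj1 act_scal.
have hB : forall j, (j < p)%N -> forall n,
    ('X - C%:P) * Pj j.+1 n =
    LS gamma p (iota j.+2 (p - j.+1)) (act (Umat gamma p) (LS gamma p (iota 1 j) (Pj j))) n.
  move=> j hj n; rewrite -hF //.
  have e2 : iota 1 j.+1 = iota 1 j ++ [:: j.+1] by have := iotaD 1 j 1; rewrite addn1 add1n.
  have hPf : Pj j = act (Lmat gamma p j.+1) (Pj j.+1).
    by apply: functional_extensionality => m; apply: hA.
  by rewrite /F e2 /LS foldr_cat /= -/(LS _ _ _ _) hPf.
move=> j hj; split.
  move=> r /andP[r1 rp]; rewrite /vec_a.
  case: (ltnP r p) => hr.
    by have := hnu j.+1 hj r; rewrite r1 rp => /(_ isT).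
  have erp : r = p by apply/eqP; rewrite eqn_leq rp hr.
  subst r.
  have h11 : (1 <= 1 <= p)%N by rewrite hp.
  have [hl hv hn] := hnu j (ltnW hj) 1%N h11.
  have hb : forall k, Band (fun q => nu j 1%N ('X^k * q))
      (LS gamma p (iota j.+2 (p - j.+1)) (act (Umat gamma p) (LS gamma p (iota 1 j) (Pj j))))
      (k * p + p)%N.
    move=> k.
    have hk0 : Band (fun q => nu j 1%N ('X^k * q)) (Pj j) (k * p + 1)%N.
      apply: band_of; [by rewrite addn1 | exact: hv | exact: hn].
    have hlk := lfun_Xk k hl.
    have a1 : (1 + j <= p.+1)%N by lia.
    have a2 : (j.+2 + (p - j.+1) <= p.+1)%N by lia.
    have t1 : (0 < k * p + 1)%N by lia.
    have h1 := Band_LS hgam (@all_iota 1 j p (leqnn 1) a1) t1 hlk hk0.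
    have t2 : (0 < k * p + 1 + size (iota 1 j))%N by lia.
    have h2 := Band_U hU t2 hlk h1.
    have h3 := Band_LS hgam (@all_iota j.+2 (p - j.+1) p (ltn0Sn _) a2) t2 hlk h2.
    rewrite !size_iota in h3.
    have -> : (k * p + p = k * p + 1 + j + (p - j.+1))%N by lia.
    exact: h3.
  split; first exact: lfun_shift.
  - move=> k n hkn; rewrite /shiftf mulrCA hB //.
    by have [hv' _] := hb k; apply: hv'.
  - move=> k; rewrite /shiftf mulrCA hB //.
    by have [_ hn'] := hb k; rewrite subn1.
move=> r /andP[r1 rp]; rewrite /vec_b.
case: (eqVneq r 1%N) => [->|hr1].
  have h11 : (1 <= 1 <= p)%N by rewrite hp.
  exact: (hnu j (ltnW hj) 1%N h11).
have hr' : (1 <= r.-1 <= p)%N by apply/andP; lia.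
have [hl hv hn] := hnu j.+1 hj r.-1 hr'.
have hPf : Pj j = act (Lmat gamma p j.+1) (Pj j.+1).
  by apply: functional_extensionality => m; apply: hA.
have hb : forall k, Band (fun q => nu j.+1 r.-1 ('X^k * q)) (Pj j) (k * p + r)%N.
  move=> k.
  have t1 : (0 < k * p + r.-1)%N by lia.
  have hk0 := band_of t1 (hv k) (hn k).
  have hj1 : (1 <= j.+1 <= p)%N by apply/andP; lia.
  have := Band_L hgam hj1 t1 (lfun_Xk k hl) hk0.
  rewrite -hPf.
  by have -> : ((k * p + r.-1).+1 = k * p + r)%N by lia.
split => //.
- move=> k n hkn; by have [hv' _] := hb k; apply: hv'.
- move=> k; by have [_ hn'] := hb k; rewrite subn1.
Qed.
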